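(* Let $m \ge 2$, $n \ge 2$, and for $1 \le i \le m$ let $f_i(x) = x^T A_i x + c_i^T x + d_i$ be quadratics on $\mathbb{R}^n$ with $A_i$ symmetric, where $f_1(x) = \|x\|^2 - 1$. For $2 \le i \le m$ let $U_i > 0$ satisfy $|f_i(x)| \le U_i$ for all $x$ with $\|x\|^2 \le 2$. Let (S1) be the system $f_i(x) \le 0$, $1 \le i \le m$, and let (S2) be the system in the real variables $v_0, x_1,\ldots,x_n, s_1,\ldots,s_m, w_2,\ldots,w_m$: $$x^T A_i x + c_i^T v_0 x + d_i v_0^2 + s_i^2 = 0, \quad 1 \le i \le m,$$ $$\frac{s_i^2 + w_i^2}{U_i} - v_0^2 = 0, \quad 2 \le i \le m,$$ $$\|x\|^2 + s_1^2 + \sum_{i=2}^m \frac{s_i^2 + w_i^2}{U_i} + v_0^2 = m+1.$$ Let $M$ denote the largest absolute value of a coefficient in (S2), and let $0 \le \epsilon < 1/2$. (a) If (S1) is $\epsilon$-feasible, then (S2) is $m\epsilon$-feasible. (b) Conversely, if (S2) is $\epsilon$-feasible, then (S1) is $(2n+1)M\epsilon$-feasible.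
   Context: For a system of inequalities $f_i(x)\le 0$, a vector $\hat x$ is $\epsilon$-feasible if $f_i(\hat x) \le \epsilon$ for all $i$, and the system is $\epsilon$-feasible if such a vector exists. For equations $h = 0$, $\epsilon$-feasibility means $|h| \le \epsilon$. *)

(* Defs.v *)
From HB Require Import structures.
From mathcomp Require Import all_boot all_order all_algebra.
From mathcomp Require Import reals.
Set Implicit Arguments. Unset Strict Implicit. Unset Printing Implicit Defensive.
Import Order.TTheory GRing.Theory Num.Theory.
Local Open Scope ring_scope.

Section Defs.
Variables (R : realType) (m n : nat).
Variables (A : 'I_m -> 'M[R]_n) (c : 'I_m -> 'cV[R]_n) (d : 'I_m -> R)
          (U : 'I_m -> R).

Definition sqnorm (x : 'cV[R]_n) : R := \sum_(j < n) x j 0 ^+ 2.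

Definition qform (B : 'M[R]_n) (x : 'cV[R]_n) : R := (x^T *m B *m x) 0 0.

Definition lform (b : 'cV[R]_n) (x : 'cV[R]_n) : R := (b^T *m x) 0 0.

Definition fq (i : 'I_m) (x : 'cV[R]_n) : R := qform (A i) x + lform (c i) x + d i.

Definition S1_feasible (eps : R) : Prop :=
  exists x : 'cV[R]_n, forall i : 'I_m, fq i x <= eps.

(* Left-hand sides minus right-hand sides of the equations of (S2).
   The index i : 'I_m with val i = 0 corresponds to f_1 of the paper;
   w (val i = 0) is a dummy variable appearing in no equation. *)
Definition S2_eq (i : 'I_m) (v0 : R) (x : 'cV[R]_n) (s : 'I_m -> R) : R :=
  qform (A i) x + v0 * lform (c i) x + d i * v0 ^+ 2 + s i ^+ 2.

Definition S2_mid (i : 'I_m) (v0 : R) (s w : 'I_m -> R) : R :=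
  (s i ^+ 2 + w i ^+ 2) / U i - v0 ^+ 2.

Definition S2_last (v0 : R) (x : 'cV[R]_n) (s w : 'I_m -> R) : R :=
  sqnorm x + \sum_(i < m | val i == 0%N) s i ^+ 2
  + \sum_(i < m | val i != 0%N) (s i ^+ 2 + w i ^+ 2) / U i
  + v0 ^+ 2 - (m.+1)%:R.

Definition S2_feasible (eps : R) : Prop :=
  exists (v0 : R) (x : 'cV[R]_n) (s w : 'I_m -> R),
    (forall i : 'I_m, `|S2_eq i v0 x s| <= eps) /\
    (forall i : 'I_m, val i != 0%N -> `|S2_mid i v0 s w| <= eps) /\
    `|S2_last v0 x s w| <= eps.

(* Largest absolute value of a coefficient of (S2), where each equation is
   read as a polynomial equation p = 0 (p = lhs - rhs) in the variables
   v0, x_1..x_n, s_1..s_m, w_2..w_m, and its coefficients are those of the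
   monomials of p: for x^T A_i x the coefficient of x_j^2 is A_i(j,j) and
   that of x_j x_k (j < k) is A_i(j,k) + A_i(k,j); c_i(j) for v0 x_j; d_i for
   v0^2; 1 for s_i^2; 1/U_i and -1 in the middle equations; 1, 1/U_i and the
   constant -(m+1) in the last equation. *)
Definition coef_quad (B : 'M[R]_n) : R :=
  \big[Num.max/0]_(j < n) \big[Num.max/0]_(k < n)
     (if j == k then `|B j j|
      else if (j < k)%N then `|B j k + B k j| else 0).

Definition coef_lin (b : 'cV[R]_n) : R := \big[Num.max/0]_(j < n) `|b j 0|.

Definition coef_eq (i : 'I_m) : R :=
  Num.max (coef_quad (A i)) (Num.max (coef_lin (c i)) (Num.max `|d i| 1)).

Definition coef_mid (i : 'I_m) : R :=
  if val i != 0%N then Num.max `|(U i)^-1| 1 else 0.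

Definition S2_maxcoef : R :=
  Num.max (\big[Num.max/0]_(i < m) Num.max (coef_eq i) (coef_mid i))
          (Num.max 1 `|(m.+1)%:R : R|).
End Defs.

(* Main.v *)
Require Import Defs.
From HB Require Import structures.
From mathcomp Require Import all_boot all_order all_algebra.
From mathcomp Require Import reals.
From mathcomp Require Import ring lra.
Import Order.TTheory GRing.Theory Num.Theory.
Local Open Scope ring_scope.

Section Aux.
Variables (R : realType) (n : nat).
Implicit Types (B : 'M[R]_n) (b x : 'cV[R]_n).

Lemma trZ (a : R) x : (a *: x)^T = a *: x^T.
Proof. by apply/matrixP => i j; rewrite !mxE. Qed.

Lemma qformZ a B x : qform B (a *: x) = a ^+ 2 * qform B x.
Proof. by rewrite /qform trZ -scalemxAl -scalemxAl -scalemxAr !mxE expr2 mulrA. Qed.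

Lemma lformZ a b x : lform b (a *: x) = a * lform b x.
Proof. by rewrite /lform -scalemxAr mxE. Qed.

Lemma sqnormZ a x : sqnorm (a *: x) = a ^+ 2 * sqnorm x.
Proof. by rewrite /sqnorm mulr_sumr; apply: eq_bigr => j _; rewrite mxE exprMn. Qed.

Lemma qform0 B : qform B 0 = 0.
Proof. by rewrite /qform mulmx0 mxE. Qed.

Lemma lform0 b : lform b 0 = 0.
Proof. by rewrite /lform mulmx0 mxE. Qed.

Lemma sum_val0 m (i0 : 'I_m) (hi0 : val i0 = 0%N) (F : 'I_m -> R) :
  \sum_(i < m | val i == 0%N) F i = F i0.
Proof.
apply: big_pred1 => i /=; apply/eqP/eqP => [h|->//]; by apply/val_inj; rewrite /= h hi0.
Qed.

Lemma sum_split0 m (i0 : 'I_m) (hi0 : val i0 = 0%N) (F : 'I_m -> R) :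
  \sum_(i < m) F i = F i0 + \sum_(i < m | val i != 0%N) F i.
Proof.
rewrite (bigD1 i0) //=; congr (_ + _); apply: eq_bigl => i.
by rewrite -hi0 (inj_eq val_inj).
Qed.

Lemma count_ne0 m (i0 : 'I_m) (hi0 : val i0 = 0%N) :
  \sum_(i < m | val i != 0%N) (1 : R) = m%:R - 1.
Proof.
have := @sum_split0 m i0 hi0 (fun _ => (1:R)).
rewrite sumr_const card_ord => h.
by rewrite h addrAC subrr add0r.
Qed.
Lemma ppc (y : R) : (0 <= y /\ (if 0 <= y then y else 0) = y) \/
   (y < 0 /\ (if 0 <= y then y else 0) = 0).
Proof. by case: (lerP 0 y) => h; [left|right]. Qed.
End Aux.
Arguments sum_val0 {R m i0} hi0 F.
Arguments sum_split0 {R m i0} hi0 F.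
Arguments count_ne0 {R m i0} hi0.
Arguments ppc {R} y.

Theorem lemma2 (R : realType) (m n : nat) (hm : (2 <= m)%N) (hn : (2 <= n)%N)
  (A : 'I_m -> 'M[R]_n) (c : 'I_m -> 'cV[R]_n) (d : 'I_m -> R) (U : 'I_m -> R)
  (hsym : forall i : 'I_m, (A i)^T = A i)
  (hf1 : forall i : 'I_m, val i = 0%N ->
           forall x : 'cV[R]_n, fq A c d i x = sqnorm x - 1)
  (hUpos : forall i : 'I_m, val i != 0%N -> 0 < U i)
  (hUbnd : forall i : 'I_m, val i != 0%N ->
             forall x : 'cV[R]_n, sqnorm x <= 2 -> `|fq A c d i x| <= U i)
  (eps : R) (heps0 : 0 <= eps) (heps1 : eps < 1 / 2) :
  (S1_feasible A c d eps -> S2_feasible A c d U (m%:R * eps)) /\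
  (S2_feasible A c d U eps ->
     S1_feasible A c d ((2 * n + 1)%:R * S2_maxcoef A c d U * eps)).
Proof.
have m0 : (0 < m)%N by apply: leq_trans hm.
pose i0 : 'I_m := Ordinal m0.
have hi0 : val i0 = 0%N by [].
have hM : (2:R) <= m%:R by rewrite (ler_nat R 2 m).
split.
- move=> [x hx].
  have hx0 := hf1 i0 hi0 x.
  have hx0' := hx i0.
  have hnorm : sqnorm x <= 2 by lra.
  pose sf i := if 0 <= - fq A c d i x then - fq A c d i x else 0.
  have sf_ge0 i : 0 <= sf i by rewrite /sf; case: (ppc (- fq A c d i x)) => [[h ->]|[h ->]].
  have hsfU i : val i != 0%N -> sf i <= U i.
    move=> hi; have := hUbnd i hi x hnorm; have := ler_norm (- fq A c d i x).
    rewrite normrN /sf => h1 h2.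
    case: (ppc (- fq A c d i x)) => [[h3 ->]|[h3 ->]]; first lra.
    exact: le_trans (normr_ge0 _) h2.
  exists 1, x, (fun i => Num.sqrt (sf i)), (fun i => Num.sqrt (U i - sf i)).
  have hs2 i : Num.sqrt (sf i) ^+ 2 = sf i by rewrite sqr_sqrtr.
  have hmid i : val i != 0%N ->
      (Num.sqrt (sf i) ^+ 2 + Num.sqrt (U i - sf i) ^+ 2) / U i = 1.
    move=> hi; rewrite hs2 sqr_sqrtr; last by have := hsfU i hi; lra.
    have -> : sf i + (U i - sf i) = U i by ring.
    by rewrite divff // gt_eqF // hUpos.
  have hme : eps <= m%:R * eps by nra.
  split; [|split].
  + move=> i; rewrite /S2_eq hs2 mul1r expr1n mulr1 -/(fq A c d i x) /sf.
    rewrite ler_norml.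
    have := hx i.
    case: (ppc (- fq A c d i x)) => [[h3 ->]|[h3 ->]] => h; apply/andP; split; lra.
  + move=> i hi; rewrite /S2_mid hmid // expr1n subrr normr0.
    exact: mulr_ge0.
  + rewrite /S2_last (sum_val0 hi0) hs2.
    rewrite (eq_bigr (fun _ => 1)); last by move=> i hi; rewrite hmid.
    rewrite (count_ne0 hi0) expr1n mulrS /sf hx0 ler_norml.
    case: (ppc (- (sqnorm x - 1))) => [[h3 ->]|[h3 ->]]; apply/andP; split; lra.
- move=> [v0 [x [s [w [H1 [H2 H3]]]]]].
  have hz : sqnorm (0 : 'cV[R]_n) = 0.
    by rewrite /sqnorm big1 // => j _; rewrite mxE expr2 mul0r.
  have e0 := hf1 i0 hi0 0.
  have ep := hf1 i0 hi0 x.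
  have en := hf1 i0 hi0 ((-1) *: x).
  move: e0 ep en; rewrite /fq qformZ lformZ sqnormZ qform0 lform0 hz sqrrN expr1n.
  move=> e0 ep en.
  have hq : qform (A i0) x = sqnorm x by lra.
  have hl : lform (c i0) x = 0 by lra.
  have hd : d i0 = -1 by lra.
  have := H1 i0; rewrite /S2_eq hq hl hd mulr0 ler_norml => /andP [h1a h1b].
  move: H3; rewrite /S2_last (sum_val0 hi0) ler_norml => /andP [h3a h3b].
  have hsum : \sum_(i < m | val i != 0%N) (s i ^+ 2 + w i ^+ 2) / U i
              <= (v0 ^+ 2 + eps) * (m%:R - 1).
    rewrite -(count_ne0 hi0) mulr_sumr; apply: ler_sum => i hi.
    have := H2 i hi; rewrite /S2_mid ler_norml => /andP [_ h]; rewrite mulr1; lra.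
  have hs0 := sqr_ge0 (s i0).
  have hV : 1 - eps <= v0 ^+ 2 by nra.
  have hv0 : v0 != 0 by apply/eqP => h; move: hV; rewrite h expr0n /=; lra.
  have hMc : 1 <= S2_maxcoef A c d U.
    by rewrite /S2_maxcoef le_max; apply/orP; right; rewrite le_max lexx.
  have hK : (5:R) <= (2 * n + 1)%:R.
    by rewrite (ler_nat R 5); apply: leq_trans (_ : 5 <= 2 * 2 + 1)%N _ => //; rewrite leq_add2r leq_mul2l.
  exists (v0^-1 *: x) => i.
  have hy : v0^-1 ^+ 2 * v0 ^+ 2 = 1 by rewrite -exprMn mulVf // expr1n.
  have hy0 := sqr_ge0 (v0^-1).
  have -> : fq A c d i (v0^-1 *: x) =
      v0^-1 ^+ 2 * (qform (A i) x + v0 * lform (c i) x + d i * v0 ^+ 2).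
    by rewrite /fq qformZ lformZ; field.
  have := H1 i; rewrite /S2_eq ler_norml => /andP [_ h].
  have := sqr_ge0 (s i) => hsi.
  set T := qform (A i) x + v0 * lform (c i) x + d i * v0 ^+ 2.
  have hT : T <= eps by rewrite /T; lra.
  have h2 : v0^-1 ^+ 2 <= 2 by nra.
  have h5 : v0^-1 ^+ 2 * T <= v0^-1 ^+ 2 * eps by rewrite ler_wpM2l.
  set M := S2_maxcoef A c d U.
  set K := (2 * n + 1)%:R.
  have hKM : 2 <= K * M.
    have hK1 : K * 1 <= K * M by rewrite ler_wpM2l //; apply: le_trans hK; lra.
    lra.
  have h3 : 2 * eps <= K * M * eps by rewrite ler_wpM2r.
  have h4 : v0^-1 ^+ 2 * eps <= 2 * eps by rewrite ler_wpM2r.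
  lra.
Qed.
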